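(* Let $n\ge 1$ and let $\mathrm{metric}$ be a performance metric of the form $$\mathrm{metric}(\hat{\mathbf y},\mathbf y)=\sum_{j=1}^{J}\frac{a_j\,\mathrm{TP}+b_j\,\mathrm{TN}+f_j(\mathrm{PP},\mathrm{AP})}{g_j(\mathrm{PP},\mathrm{AP})},\qquad \hat{\mathbf y},\mathbf y\in\{0,1\}^n .$$ Let $\mathcal P$ and $\mathcal Q$ be arbitrary probability distributions on $\{0,1\}^n$, and let $\hat{\mathbf Y}\sim\mathcal P$ and $\check{\mathbf Y}\sim\mathcal Q$ be independent. Then $$\mathbb E_{\hat{\mathbf Y}\sim\mathcal P,\ \check{\mathbf Y}\sim\mathcal Q}\big[\mathrm{metric}(\hat{\mathbf Y},\check{\mathbf Y})\big]=\sum_{k=0}^{n}\sum_{l=0}^{n}\sum_{j=1}^{J}\frac{1}{g_j(k,l)}\Big\{a_j\,[\mathbf p_k^1\cdot\mathbf q_l^1]+b_j\,[\mathbf p_k^0\cdot\mathbf q_l^0]+f_j(k,l)\,r_k\,s_l\Big\}.$$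
   Context: For $\hat{\mathbf y},\mathbf y\in\{0,1\}^n$ (first argument = prediction, second = reference label): $\mathrm{TP}=\sum_i\hat y_iy_i$, $\mathrm{TN}=\sum_i(1-\hat y_i)(1-y_i)$, $\mathrm{PP}=\sum_i\hat y_i$, $\mathrm{AP}=\sum_i y_i$. In the metric, $a_j,b_j\in\mathbb R$ are constants and $f_j,g_j:\{0,\dots,n\}^2\to\mathbb R$ are functions with $g_j(k,l)\neq 0$ for all $k,l$. Marginal notation: for $a\in\{0,1\}$ and $k\in\{0,\dots,n\}$, $\mathbf p_k^a\in\mathbb R^n$ has entries $(\mathbf p_k^a)_i=\mathcal P(\hat Y_i=a,\ \sum_{i'}\hat Y_{i'}=k)$ and $r_k=\mathcal P(\sum_i\hat Y_i=k)$; similarly $(\mathbf q_l^a)_i=\mathcal Q(\check Y_i=a,\ \sum_{i'}\check Y_{i'}=l)$ and $s_l=\mathcal Q(\sum_i\check Y_i=l)$. The dot denotes the Euclidean inner product on $\mathbb R^n$. *)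

(* Defs.v *)
From HB Require Import structures.
From mathcomp Require Import all_boot all_order all_algebra.
Set Implicit Arguments. Unset Strict Implicit. Unset Printing Implicit Defensive.
Import Order.TTheory GRing.Theory Num.Theory.
Local Open Scope ring_scope.

Definition bvec (n : nat) := {ffun 'I_n -> bool}.

Definition TP n (yh y : bvec n) : nat := (\sum_(i < n) (yh i && y i))%N.
Definition TN n (yh y : bvec n) : nat := (\sum_(i < n) (~~ yh i && ~~ y i))%N.
Definition PP n (yh : bvec n) : nat := (\sum_(i < n) yh i)%N.
Definition AP n (y : bvec n) : nat := (\sum_(i < n) y i)%N.

Definition metric (R : fieldType) n J (a b : 'I_J -> R)
    (f g : 'I_J -> nat -> nat -> R) (yh y : bvec n) : R :=
  \sum_(j < J) ((a j * (TP yh y)%:R + b j * (TN yh y)%:R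
                  + f j (PP yh) (AP y)) / g j (PP yh) (AP y)).

Definition is_distr (R : numDomainType) n (P : {ffun bvec n -> R}) : Prop :=
  (forall y, 0 <= P y) /\ \sum_(y : bvec n) P y = 1.

Definition expect2 (R : nzRingType) n (P Q : {ffun bvec n -> R})
    (F : bvec n -> bvec n -> R) : R :=
  \sum_(yh : bvec n) \sum_(yc : bvec n) P yh * Q yc * F yh yc.

(* (p_k^a)_i = P(Yh_i = a, sum Yh = k) *)
Definition marg (R : nzRingType) n (P : {ffun bvec n -> R}) (a : bool) (k : nat)
    (i : 'I_n) : R :=
  \sum_(y : bvec n | (y i == a) && (PP y == k)) P y.

(* r_k = P(sum Yh = k) *)
Definition mass (R : nzRingType) n (P : {ffun bvec n -> R}) (k : nat) : R :=
  \sum_(y : bvec n | PP y == k) P y.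

Definition dotv (R : nzRingType) n (u v : 'I_n -> R) : R := \sum_(i < n) u i * v i.

(* Main.v *)
Require Import Defs.
From HB Require Import structures.
From mathcomp Require Import all_boot all_order all_algebra.
From mathcomp Require Import ring.
Import Order.TTheory GRing.Theory Num.Theory.
Local Open Scope ring_scope.

Section Aux.
Variable R : realFieldType.

Lemma sum_cond (T : finType) (C : pred T) (F : T -> R) :
  \sum_(y | C y) F y = \sum_y (C y)%:R * F y.
Proof.
rewrite big_mkcond; apply: eq_bigr => y _; case: (C y); rewrite ?mul1r ?mul0r //.
Qed.

Lemma lin3 (T : finType) (c1 c2 c3 : R) (u v w : T -> R) :
  c1 * \sum_i u i + c2 * \sum_i v i + c3 * \sum_i w i
  = \sum_i (c1 * u i + c2 * v i + c3 * w i).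
Proof. by rewrite !big_split /= !mulr_sumr. Qed.

Lemma PP_le n (y : bvec n) : (PP y <= n)%N.
Proof.
rewrite /PP -[X in (_ <= X)%N]card_ord -sum1_card.
by apply: leq_sum => i _; exact: leq_b1.
Qed.

Lemma pick1 (n m : nat) (F : nat -> R) : (m <= n)%N ->
  \sum_(0 <= k < n.+1) (m == k)%:R * F k = F m.
Proof.
move=> hm; rewrite (bigD1_seq m) /=;
  [ | by rewrite mem_index_iota | exact: (iota_uniq 0 n.+1)].
rewrite eqxx mul1r big1 ?addr0 // => k hk.
by rewrite eq_sym (negbTE hk) mul0r.
Qed.

Lemma pick2 (n m1 m2 : nat) (W : nat -> nat -> R) :
  (m1 <= n)%N -> (m2 <= n)%N ->
  \sum_(0 <= k < n.+1) \sum_(0 <= l < n.+1)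
     ((m1 == k)%:R * (m2 == l)%:R * W k l) = W m1 m2.
Proof.
move=> h1 h2.
rewrite (eq_bigr (fun k => (m1 == k)%:R * W k m2)); first exact: pick1.
move=> k _.
rewrite (eq_bigr (fun l => (m2 == l)%:R * ((m1 == k)%:R * W k l))).
  by rewrite pick1.
move=> l _; ring.
Qed.

Lemma mass_prod n (P Q : {ffun bvec n -> R}) k l :
  mass P k * mass Q l = \sum_(yh : bvec n) \sum_(yc : bvec n)
     ((PP yh == k)%:R * (PP yc == l)%:R * (P yh * Q yc)).
Proof.
rewrite /mass (@sum_cond (bvec n) (fun y : bvec n => PP y == k)) (@sum_cond (bvec n) (fun y : bvec n => PP y == l)) big_distrl; apply: eq_bigr => yh _.
rewrite big_distrr; apply: eq_bigr => yc _ /=; ring.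
Qed.

Lemma dot_eq n (P Q : {ffun bvec n -> R}) c k l :
  dotv (marg P c k) (marg Q c l) = \sum_(yh : bvec n) \sum_(yc : bvec n)
     ((PP yh == k)%:R * (PP yc == l)%:R * (P yh * Q yc)
       * (\sum_(i < n) ((yh i == c) && (yc i == c)))%N%:R).
Proof.
rewrite /dotv /marg.
under eq_bigr => i _ do rewrite (@sum_cond (bvec n) (fun y : bvec n => (y i == c) && (PP y == k)))
  (@sum_cond (bvec n) (fun y : bvec n => (y i == c) && (PP y == l))) big_distrl.
under eq_bigr => i _ do under eq_bigr => yh _ do rewrite big_distrr.
rewrite exchange_big; apply: eq_bigr => yh _.
rewrite exchange_big; apply: eq_bigr => yc _.
rewrite natr_sum mulr_sumr; apply: eq_bigr => i _ /=.
case: (yh i == c); case: (yc i == c); case: (PP yh == k); case: (PP yc == l);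
  rewrite /=; ring.
Qed.

End Aux.

Theorem theorem1 (R : realFieldType) (n J : nat) (hn : (1 <= n)%N)
    (a b : 'I_J -> R) (f g : 'I_J -> nat -> nat -> R)
    (hg : forall j (k l : nat), (k <= n)%N -> (l <= n)%N -> g j k l != 0)
    (P Q : {ffun bvec n -> R}) (hP : is_distr P) (hQ : is_distr Q) :
  expect2 P Q (metric a b f g) =
  \sum_(0 <= k < n.+1) \sum_(0 <= l < n.+1) \sum_(j < J)
    (g j k l)^-1 * (a j * dotv (marg P true k) (marg Q true l)
                    + b j * dotv (marg P false k) (marg Q false l)
                    + f j k l * mass P k * mass Q l).
Proof.
pose Y j k l (yh yc : bvec n) := P yh * Q yc *
  ((a j * (TP yh yc)%:R + b j * (TN yh yc)%:R + f j k l) / g j k l).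
have term : forall j k l,
  (g j k l)^-1 * (a j * dotv (marg P true k) (marg Q true l)
                    + b j * dotv (marg P false k) (marg Q false l)
                    + f j k l * mass P k * mass Q l)
  = \sum_(yh : bvec n) \sum_(yc : bvec n)
      ((PP yh == k)%:R * (PP yc == l)%:R * Y j k l yh yc).
  move=> j k l; rewrite !dot_eq -mulrA mass_prod lin3 mulr_sumr.
  apply: eq_bigr => yh _; rewrite lin3 mulr_sumr; apply: eq_bigr => yc _.
  have -> : (\sum_(i < n) ((yh i == true) && (yc i == true)))%N = TP yh yc.
    by rewrite /TP; apply: eq_bigr => i _; rewrite !eqb_id.
  have -> : (\sum_(i < n) ((yh i == false) && (yc i == false)))%N = TN yh yc.
    by rewrite /TN; apply: eq_bigr => i _; rewrite !eqbF_neg.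
  rewrite /Y; ring.
under eq_bigr => k _ do under eq_bigr => l _ do under eq_bigr => j _ do rewrite term.
under eq_bigr => k _ do rewrite exchange_big.
rewrite exchange_big.
have -> : expect2 P Q (metric a b f g) =
   \sum_(j < J) \sum_(yh : bvec n) \sum_(yc : bvec n) Y j (PP yh) (PP yc) yh yc.
  rewrite /expect2 [RHS]exchange_big /=.
  under [RHS]eq_bigr => yh _ do rewrite exchange_big.
  apply: eq_bigr => yh _; apply: eq_bigr => yc _.
  by rewrite /metric mulr_sumr.
apply: eq_bigr => j _.
rewrite [RHS](eq_bigr (fun k => \sum_(yh : bvec n) \sum_(0 <= l < n.+1)
    \sum_(yc : bvec n) ((PP yh == k)%:R * (PP yc == l)%:R * Y j k l yh yc))); last first.
  by move=> k _; rewrite exchange_big.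
rewrite [RHS]exchange_big; apply: eq_bigr => yh _.
under [RHS]eq_bigr => k _ do rewrite exchange_big.
rewrite [RHS]exchange_big; apply: eq_bigr => yc _.
by rewrite (@pick2 R n _ _ (fun k l => Y j k l yh yc) ) ?PP_le.
Qed.
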